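(* Let $G$ be a connected graph in $\mathcal{C}$. If $G$ contains an induced cycle of length 7, then $G$ has at most 21 vertices.
   Context: $\mathcal{C}=\mathrm{Free}(\text{claw}, 4K_1, \text{5-wheel}, C_5\text{-twin}, P_5\text{-twin}, K_5-e)$, where $\mathrm{Free}(L)$ is the class of graphs with no induced subgraph isomorphic to a member of $L$; the claw is $K_{1,3}$; $4K_1$ is the edgeless graph on 4 vertices; the 5-wheel is $C_5$ plus a vertex adjacent to all five cycle vertices; the $C_5$-twin is $C_5$ plus a new vertex adjacent to one cycle vertex $v$ and both cycle-neighbours of $v$; the $P_5$-twin is a path $p_1p_2p_3p_4p_5$ plus a new vertex adjacent to exactly $p_2,p_3,p_4$; $K_5-e$ is $K_5$ minus one edge. *)

(* Defs.v *)
(* Simple graphs = symmetric irreflexive relations on a finType. *)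
From mathcomp Require Import all_boot.
Set Implicit Arguments. Unset Strict Implicit. Unset Printing Implicit Defensive.

Definition induced_in (T1 T2 : finType) (e1 : rel T1) (e2 : rel T2) : Prop :=
  exists f : T1 -> T2, injective f /\ forall x y, e2 (f x) (f y) = e1 x y.

Definition free_of (T1 T2 : finType) (e1 : rel T1) (e2 : rel T2) : Prop :=
  ~ induced_in e1 e2.

Definition cyc_adj (n a b : nat) : bool :=
  (a != b) && (((a.+1 %% n) == b) || ((b.+1 %% n) == a)).

Definition cycle_graph (n : nat) : rel 'I_n := fun x y => cyc_adj n x y.
Arguments cycle_graph n : clear implicits.

Definition claw : rel 'I_4 :=
  fun x y => (val x != val y) && ((val x == 0) || (val y == 0)).

Definition fourK1 : rel 'I_4 := fun _ _ => false.

Definition wheel5 : rel 'I_6 :=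
  fun x y =>
    ((val x < 5) && (val y < 5) && cyc_adj 5 x y)
    || ((val x != val y) && ((val x == 5) || (val y == 5))).

Definition c5twin_adj (a b : nat) : bool :=
  ((a < 5) && (b < 5) && cyc_adj 5 a b)
  || ((a == 5) && (b \in [:: 0; 1; 4]))
  || ((b == 5) && (a \in [:: 0; 1; 4])).
Definition c5twin : rel 'I_6 := fun x y => c5twin_adj x y.

Definition path_adj (a b : nat) : bool := (a.+1 == b) || (b.+1 == a).
Definition p5twin_adj (a b : nat) : bool :=
  ((a < 5) && (b < 5) && path_adj a b)
  || ((a == 5) && (b \in [:: 1; 2; 3]))
  || ((b == 5) && (a \in [:: 1; 2; 3])).
Definition p5twin : rel 'I_6 := fun x y => p5twin_adj x y.

Definition k5e : rel 'I_5 :=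
  fun x y => (val x != val y) && ~~ ((val x <= 1) && (val y <= 1)).

Definition in_classC (T : finType) (e : rel T) : Prop :=
  free_of claw e /\ free_of fourK1 e /\ free_of wheel5 e /\
  free_of c5twin e /\ free_of p5twin e /\ free_of k5e e.

Definition simple_graph (T : finType) (e : rel T) : Prop :=
  symmetric e /\ irreflexive e.

Definition connected_graph (T : finType) (e : rel T) : Prop :=
  forall x y : T, connect e x y.

(* Main.v *)
Require Import Defs.
From mathcomp Require Import all_boot.
From mathcomp Require Import zify.
Set Implicit Arguments. Unset Strict Implicit. Unset Printing Implicit Defensive.

Definition chk n (P : nat -> nat -> bool) m (Q : nat -> nat -> bool) (w : seq nat) :=
  [&& size w == n, uniq w, all (fun a => a < m) w &
      all (fun i => all (fun j => Q (nth 0 w i) (nth 0 w j) == P i j) (iota 0 n)) (iota 0 n)].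

Lemma transfer (T : finType) (e : rel T) n (F : rel 'I_n) (P : nat -> nat -> bool)
  (HF : forall x y : 'I_n, F x y = P x y) m (Q : nat -> nat -> bool) (h : nat -> T)
  (Hh : forall a b, a < m -> b < m -> e (h a) (h b) = Q a b)
  (Hinj : forall a b, a < m -> b < m -> h a = h b -> a = b) w :
  chk n P m Q w -> induced_in F e.
Proof.
case/and4P => /eqP Hs Hu /allP Hm /allP Hc.
have Hw (x : 'I_n) : nth 0 w x < m by apply: Hm; rewrite mem_nth // Hs.
exists (fun x : 'I_n => h (nth 0 w x)); split.
- move=> x y /(Hinj _ _ (Hw x) (Hw y)) /eqP; rewrite nth_uniq ?Hs //.
  by move/eqP/val_inj.
- move=> x y; rewrite Hh // HF.
  have Hx : val x \in iota 0 n by rewrite mem_iota /= add0n ltn_ord.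
  have /allP H := Hc x Hx.
  by apply/eqP; apply: H; rewrite mem_iota /= add0n ltn_ord.
Qed.

Definition clawP (a b : nat) := (a != b) && ((a == 0) || (b == 0)).
Definition k1P (a b : nat) := false.
Definition w5P (a b : nat) := ((a < 5) && (b < 5) && cyc_adj 5 a b) || ((a != b) && ((a == 5) || (b == 5))).
Definition k5eP (a b : nat) := (a != b) && ~~ ((a <= 1) && (b <= 1)).

Definition fP (k : nat) : nat * (nat -> nat -> bool) :=
  match k with
  | 0 => (4, clawP) | 1 => (4, k1P) | 2 => (6, w5P) | 3 => (6, c5twin_adj)
  | 4 => (6, p5twin_adj) | _ => (5, k5eP) end.

Lemma no_emb (T : finType) (e : rel T) (HC : in_classC e) m (Q : nat -> nat -> bool) (h : nat -> T)
  (Hh : forall a b, a < m -> b < m -> e (h a) (h b) = Q a b)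
  (Hinj : forall a b, a < m -> b < m -> h a = h b -> a = b) k w :
  k < 6 -> chk (fP k).1 (fP k).2 m Q w = false.
Proof.
case: HC => [c1 [c2 [c3 [c4 [c5 c6]]]]] Hk; apply/negbTE/negP => Hc.
case: k Hk Hc => [|[|[|[|[|[|k]]]]]] // _ Hc.
- by apply: c1; apply: (transfer (F := claw) _ Hh Hinj Hc).
- by apply: c2; apply: (transfer (F := fourK1) _ Hh Hinj Hc).
- by apply: c3; apply: (transfer (F := wheel5) _ Hh Hinj Hc).
- by apply: c4; apply: (transfer (F := c5twin) _ Hh Hinj Hc).
- by apply: c5; apply: (transfer (F := p5twin) _ Hh Hinj Hc).
- by apply: c6; apply: (transfer (F := k5e) _ Hh Hinj Hc).
Qed.

Definition Q1 (bs : seq bool) (a b : nat) : bool :=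
  if (a < 7) && (b < 7) then cyc_adj 7 a b
  else if (a == 7) && (b < 7) then nth false bs b
  else if (b == 7) && (a < 7) then nth false bs a
  else false.

Definition Q2 (bs1 bs2 : seq bool) (c : bool) (a b : nat) : bool :=
  if (a < 8) && (b < 8) then Q1 bs1 a b
  else if (a == 8) && (b < 7) then nth false bs2 b
  else if (b == 8) && (a < 7) then nth false bs2 a
  else if ((a == 8) && (b == 7)) || ((a == 7) && (b == 8)) then c
  else false.

Fixpoint allbits n : seq (seq bool) :=
  if n is n'.+1 then [seq b :: r | b <- [:: false; true], r <- allbits n'] else [:: [::]].

Lemma allbitsP bs : bs \in allbits (size bs).
Proof.
elim: bs => [|b bs IH] //=.
have Hm c : (c :: bs) \in [seq c :: r | r <- allbits (size bs)] by rewrite mem_map // => x y [].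
by case: b; rewrite !mem_cat Hm ?orbT.
Qed.
Definition good7 : seq (seq bool) := [:: [:: false; false; false; true; true; true; true]; [:: false; false; true; true; false; true; true]; [:: false; false; true; true; true; true; false]; [:: false; true; true; false; false; true; true]; [:: false; true; true; false; true; true; false]; [:: false; true; true; true; true; false; false]; [:: true; false; false; false; true; true; true]; [:: true; false; false; true; true; false; true]; [:: true; false; true; true; false; false; true]; [:: true; true; false; false; false; true; true]; [:: true; true; false; false; true; true; false]; [:: true; true; false; true; true; false; false]; [:: true; true; true; false; false; false; true]; [:: true; true; true; true; false; false; false]].
Definition table1 : seq (seq bool * nat * seq nat) := [:: ([:: false; false; false; false; false; false; false], 1, [:: 0; 2; 4; 7]); ([:: false; false; false; false; false; false; true], 0, [:: 6; 0; 5; 7]); ([:: false; false; false; false; false; true; false], 0, [:: 5; 4; 6; 7]); ([:: false; false; false; false; false; true; true], 1, [:: 0; 2; 4; 7]); ([:: false; false; false; false; true; false; false], 0, [:: 4; 3; 5; 7]); ([:: false; false; false; false; true; false; true], 0, [:: 4; 3; 5; 7]); ([:: false; false; false; false; true; true; false], 1, [:: 1; 3; 6; 7]); ([:: false; false; false; false; true; true; true], 4, [:: 0; 6; 5; 4; 3; 7]); ([:: false; false; false; true; false; false; false], 0, [:: 3; 2; 4; 7]); ([:: false; false; false; true; false; false; true], 0, [:: 3; 2; 4; 7]); ([:: false; false; false; true; false; true; false], 0, [:: 3; 2; 4; 7]); ([:: false; false; false; true; false; true; true], 0, [:: 3; 2; 4; 7]); ([:: false; false; false; true; true; false; false], 1,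 [:: 0; 2; 5; 7]); ([:: false; false; false; true; true; false; true], 0, [:: 6; 0; 5; 7]); ([:: false; false; false; true; true; true; false], 4, [:: 2; 3; 4; 5; 6; 7]); ([:: false; false; true; false; false; false; false], 0, [:: 2; 1; 3; 7]); ([:: false; false; true; false; false; false; true], 0, [:: 2; 1; 3; 7]); ([:: false; false; true; false; false; true; false], 0, [:: 2; 1; 3; 7]); ([:: false; false; true; false; false; true; true], 0, [:: 2; 1; 3; 7]); ([:: false; false; true; false; true; false; false], 0, [:: 2; 1; 3; 7]); ([:: false; false; true; false; true; false; true], 0, [:: 2; 1; 3; 7]); ([:: false; false; true; false; true; true; false], 0, [:: 2; 1; 3; 7]); ([:: false; false; true; false; true; true; true], 0, [:: 2; 1; 3; 7]); ([:: false; false; true; true; false; false; false], 1, [:: 1; 4; 6; 7]); ([:: false; false; true; true; false; false; true], 0, [:: 6; 0; 5; 7]); ([:: false; false; true; true; false; true; false], 0, [:: 5; 4; 6; 7]); ([:: false; false; true; true; true; false; false], 4, [:: 1; 2; 3; 4; 5; 7]); ([:: false; false; true; true; true; false; true], 0, [:: 6; 0; 5; 7]); ([:: false; false; true; true; true; true; true], 0, [:: 7; 2; 4; 6]); ([:: false; true; false; false; false; false; false], 0, [:: 1; 0; 2; 7]); ([:: false; true; false; false; false; false; true], 0, [:: 1; 0; 2; 7]); ([:: false; true; false; false; false; true; false], 0, [:: 1; 0; 2; 7]); ([:: false; true; false; false; false; true; true], 0, [:: 1; 0; 2; 7]); ([:: false; true; false; false; true; false; false], 0, [:: 1; 0; 2;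 7]); ([:: false; true; false; false; true; false; true], 0, [:: 1; 0; 2; 7]); ([:: false; true; false; false; true; true; false], 0, [:: 1; 0; 2; 7]); ([:: false; true; false; false; true; true; true], 0, [:: 1; 0; 2; 7]); ([:: false; true; false; true; false; false; false], 0, [:: 1; 0; 2; 7]); ([:: false; true; false; true; false; false; true], 0, [:: 1; 0; 2; 7]); ([:: false; true; false; true; false; true; false], 0, [:: 1; 0; 2; 7]); ([:: false; true; false; true; false; true; true], 0, [:: 1; 0; 2; 7]); ([:: false; true; false; true; true; false; false], 0, [:: 1; 0; 2; 7]); ([:: false; true; false; true; true; false; true], 0, [:: 1; 0; 2; 7]); ([:: false; true; false; true; true; true; false], 0, [:: 1; 0; 2; 7]); ([:: false; true; false; true; true; true; true], 0, [:: 1; 0; 2; 7]); ([:: false; true; true; false; false; false; false], 1, [:: 0; 3; 5; 7]); ([:: false; true; true; false; false; false; true], 0, [:: 6; 0; 5; 7]); ([:: false; true; true; false; false; true; false], 0, [:: 5; 4; 6; 7]); ([:: false; true; true; false; true; false; false], 0, [:: 4; 3; 5; 7]); ([:: false; true; true; false; true; false; true], 0, [:: 4; 3; 5; 7]); ([:: false; true; true; false; true; true; true], 0, [:: 7; 1; 4; 6]); ([:: false; true; true; true; false; false; false], 4, [:: 0; 1; 2; 3; 4; 7]); ([:: false; true; true; true; false; false; true], 0, [:: 6; 0; 5; 7]); ([:: false; true; true; true; false; true; false], 0, [:: 5; 4; 6; 7]); ([:: false; true; true; true; false; true; true], 0, [:: 7; 1; 3; 5]); ([:: false; true; true; true; true;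 false; true], 0, [:: 6; 0; 5; 7]); ([:: false; true; true; true; true; true; false], 0, [:: 7; 1; 3; 5]); ([:: false; true; true; true; true; true; true], 0, [:: 7; 1; 3; 5]); ([:: true; false; false; false; false; false; false], 0, [:: 0; 1; 6; 7]); ([:: true; false; false; false; false; false; true], 1, [:: 1; 3; 5; 7]); ([:: true; false; false; false; false; true; false], 0, [:: 0; 1; 6; 7]); ([:: true; false; false; false; false; true; true], 4, [:: 1; 0; 6; 5; 4; 7]); ([:: true; false; false; false; true; false; false], 0, [:: 0; 1; 6; 7]); ([:: true; false; false; false; true; false; true], 0, [:: 4; 3; 5; 7]); ([:: true; false; false; false; true; true; false], 0, [:: 0; 1; 6; 7]); ([:: true; false; false; true; false; false; false], 0, [:: 0; 1; 6; 7]); ([:: true; false; false; true; false; false; true], 0, [:: 3; 2; 4; 7]); ([:: true; false; false; true; false; true; false], 0, [:: 0; 1; 6; 7]); ([:: true; false; false; true; false; true; true], 0, [:: 3; 2; 4; 7]); ([:: true; false; false; true; true; false; false], 0, [:: 0; 1; 6; 7]); ([:: true; false; false; true; true; true; false], 0, [:: 0; 1; 6; 7]); ([:: true; false; false; true; true; true; true], 0, [:: 7; 0; 3; 5]); ([:: true; false; true; false; false; false; false], 0, [:: 0; 1; 6; 7]); ([:: true; false; true; false; false; false; true], 0, [:: 2; 1; 3; 7]); ([:: true; false; true; false; false; true; false], 0, [:: 0; 1; 6; 7]); ([:: true; false; true; false; false; true; true], 0, [:: 2; 1; 3; 7]); ([:: true; false; true; false; true; false; false], 0, [:: 0; 1;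 6; 7]); ([:: true; false; true; false; true; false; true], 0, [:: 2; 1; 3; 7]); ([:: true; false; true; false; true; true; false], 0, [:: 0; 1; 6; 7]); ([:: true; false; true; false; true; true; true], 0, [:: 2; 1; 3; 7]); ([:: true; false; true; true; false; false; false], 0, [:: 0; 1; 6; 7]); ([:: true; false; true; true; false; true; false], 0, [:: 0; 1; 6; 7]); ([:: true; false; true; true; false; true; true], 0, [:: 7; 0; 2; 5]); ([:: true; false; true; true; true; false; false], 0, [:: 0; 1; 6; 7]); ([:: true; false; true; true; true; false; true], 0, [:: 7; 0; 2; 4]); ([:: true; false; true; true; true; true; false], 0, [:: 0; 1; 6; 7]); ([:: true; false; true; true; true; true; true], 0, [:: 7; 0; 2; 4]); ([:: true; true; false; false; false; false; false], 1, [:: 2; 4; 6; 7]); ([:: true; true; false; false; false; false; true], 4, [:: 2; 1; 0; 6; 5; 7]); ([:: true; true; false; false; false; true; false], 0, [:: 5; 4; 6; 7]); ([:: true; true; false; false; true; false; false], 0, [:: 4; 3; 5; 7]); ([:: true; true; false; false; true; false; true], 0, [:: 4; 3; 5; 7]); ([:: true; true; false; false; true; true; true], 0, [:: 7; 1; 4; 6]); ([:: true; true; false; true; false; false; false], 0, [:: 3; 2; 4; 7]); ([:: true; true; false; true; false; false; true], 0, [:: 3; 2; 4; 7]); ([:: true; true; false; true; false; true; false], 0, [:: 3; 2; 4; 7]); ([:: true; true; false; true; false; true; true], 0, [:: 3; 2; 4; 7]); ([:: true; true; false; true; true; false; true], 0, [:: 7; 1; 3; 6]); ([:: true; true; false;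 true; true; true; false], 0, [:: 7; 0; 3; 5]); ([:: true; true; false; true; true; true; true], 0, [:: 7; 0; 3; 5]); ([:: true; true; true; false; false; false; false], 4, [:: 3; 2; 1; 0; 6; 7]); ([:: true; true; true; false; false; true; false], 0, [:: 5; 4; 6; 7]); ([:: true; true; true; false; false; true; true], 0, [:: 7; 0; 2; 5]); ([:: true; true; true; false; true; false; false], 0, [:: 4; 3; 5; 7]); ([:: true; true; true; false; true; false; true], 0, [:: 4; 3; 5; 7]); ([:: true; true; true; false; true; true; false], 0, [:: 7; 0; 2; 4]); ([:: true; true; true; false; true; true; true], 0, [:: 7; 0; 2; 4]); ([:: true; true; true; true; false; false; true], 0, [:: 7; 1; 3; 6]); ([:: true; true; true; true; false; true; false], 0, [:: 5; 4; 6; 7]); ([:: true; true; true; true; false; true; true], 0, [:: 7; 0; 2; 5]); ([:: true; true; true; true; true; false; false], 0, [:: 7; 0; 2; 4]); ([:: true; true; true; true; true; false; true], 0, [:: 7; 0; 2; 4]); ([:: true; true; true; true; true; true; false], 0, [:: 7; 0; 2; 4]); ([:: true; true; true; true; true; true; true], 0, [:: 7; 0; 2; 4])].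
Definition table2 : seq (seq bool * bool * nat * seq nat) := [:: ([:: false; false; false; true; true; true; true], false, 0, [:: 3; 2; 7; 8]); ([:: false; false; false; true; true; true; true], true, 4, [:: 0; 6; 7; 3; 2; 8]); ([:: false; false; true; true; false; true; true], false, 0, [:: 2; 1; 7; 8]); ([:: false; false; true; true; false; true; true], true, 3, [:: 7; 2; 1; 0; 6; 8]); ([:: false; false; true; true; true; true; false], false, 0, [:: 2; 1; 7; 8]); ([:: false; false; true; true; true; true; false], true, 4, [:: 1; 2; 7; 5; 6; 8]); ([:: false; true; true; false; false; true; true], false, 0, [:: 1; 0; 7; 8]); ([:: false; true; true; false; false; true; true], true, 3, [:: 7; 2; 3; 4; 5; 8]); ([:: false; true; true; false; true; true; false], false, 0, [:: 1; 0; 7; 8]); ([:: false; true; true; false; true; true; false], true, 3, [:: 7; 1; 0; 6; 5; 8]); ([:: false; true; true; true; true; false; false], false, 0, [:: 1; 0; 7; 8]); ([:: false; true; true; true; true; false; false], true, 4, [:: 0; 1; 7; 4; 5; 8]); ([:: true; false; false; false; true; true; true], false, 0, [:: 0; 1; 7; 8]); ([:: true; false; false; false; true; true; true], true, 4, [:: 1; 0; 7; 4; 3; 8]); ([:: true; false; false; true; true; false; true], false, 0, [:: 0; 1; 7; 8]); ([:: true; false; false; true; true; false; true], true, 3, [:: 7; 0; 1; 2; 3; 8]); ([:: true; false; true; true; false; false; true], false, 0, [:: 0; 1; 7; 8]); ([:: true; false; true; true; false; false; true], true, 3, [:: 7; 3; 4; 5; 6; 8]); ([:: true; true; false; false; false;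 true; true], false, 0, [:: 1; 2; 7; 8]); ([:: true; true; false; false; false; true; true], true, 4, [:: 2; 1; 7; 5; 4; 8]); ([:: true; true; false; false; true; true; false], false, 0, [:: 0; 6; 7; 8]); ([:: true; true; false; false; true; true; false], true, 3, [:: 7; 1; 2; 3; 4; 8]); ([:: true; true; false; true; true; false; false], false, 0, [:: 0; 6; 7; 8]); ([:: true; true; false; true; true; false; false], true, 3, [:: 7; 0; 6; 5; 4; 8]); ([:: true; true; true; false; false; false; true], false, 0, [:: 2; 3; 7; 8]); ([:: true; true; true; false; false; false; true], true, 4, [:: 3; 2; 7; 6; 5; 8]); ([:: true; true; true; true; false; false; false], false, 0, [:: 0; 6; 7; 8]); ([:: true; true; true; true; false; false; false], true, 4, [:: 4; 3; 7; 0; 6; 8])].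

Lemma fin1 : all (fun bs => (bs \in good7) ||
   has (fun t => (t.1.1 == bs) && (t.1.2 < 6) && chk (fP t.1.2).1 (fP t.1.2).2 8 (Q1 bs) t.2) table1)
   (allbits 7).
Proof. by vm_compute. Qed.

Lemma fin2 : all (fun bs => all (fun c =>
   has (fun t => (t.1.1.1 == bs) && (t.1.1.2 == c) && (t.1.2 < 6) && chk (fP t.1.2).1 (fP t.1.2).2 9 (Q2 bs bs c) t.2) table2)
   [:: false; true]) good7.
Proof. by vm_compute. Qed.

Definition cycpat (i : nat) := [seq cyc_adj 7 i k | k <- iota 0 7].

Lemma fin3 : all (fun i => all (fun j => (cycpat i == cycpat j) ==> (i == j)) (iota 0 7)) (iota 0 7)
  && all (fun i => cycpat i \notin good7) (iota 0 7).
Proof. by vm_compute. Qed.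

Definition pat (T : finType) (e : rel T) (f : 'I_7 -> T) (x : T) : seq bool :=
  [seq e x (f (inord i)) | i <- iota 0 7].

Lemma nth_pat (T : finType) (e : rel T) f x i : i < 7 -> nth false (pat e f x) i = e x (f (inord i)).
Proof. by move=> Hi; rewrite (nth_map 0) ?size_iota // nth_iota. Qed.

Lemma size_pat (T : finType) (e : rel T) f x : size (pat e f x) = 7.
Proof. by rewrite size_map size_iota. Qed.

Lemma eq7 a : 7 <= a -> a < 8 -> a = 7.
Proof. by move=> h1 h2; apply/eqP; rewrite eqn_leq -ltnS h2 h1. Qed.

Lemma loc1 (T : finType) (e : rel T) (Hs : simple_graph e) (f : 'I_7 -> T)
  (Hf : injective f) (He : forall a b, e (f a) (f b) = cycle_graph 7 a b) x
  (Hx : forall i, f i != x) :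
  let h := fun a => if a < 7 then f (inord a) else x in
  (forall a b, a < 8 -> b < 8 -> e (h a) (h b) = Q1 (pat e f x) a b) /\
  (forall a b, a < 8 -> b < 8 -> h a = h b -> a = b).
Proof.
case: Hs => Hsym Hirr h; split.
- move=> a b Ha Hb; rewrite /h /Q1.
  case: (ltnP a 7) => ha; case: (ltnP b 7) => hb /=.
  + by rewrite He /cycle_graph /= !inordK.
  + by rewrite (eq7 hb Hb) andbF eqxx /= Hsym nth_pat.
  + by rewrite (eq7 ha Ha) andbT eqxx /= nth_pat.
  + by rewrite (eq7 ha Ha) (eq7 hb Hb) !andbF Hirr.
- move=> a b Ha Hb; rewrite /h.
  case: (ltnP a 7) => ha; case: (ltnP b 7) => hb /=.
  + by move/Hf/(congr1 val); rewrite /= !inordK.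
  + by move=> E; move: (Hx (inord a)); rewrite E eqxx.
  + by move=> E; move: (Hx (inord b)); rewrite E eqxx.
  + by rewrite (eq7 ha Ha) (eq7 hb Hb).
Qed.

Lemma cases9 a : a < 9 -> [\/ [/\ a < 7, a < 8, a == 7 = false & a == 8 = false], a = 7 | a = 8].
Proof.
move=> H; case: (ltnP a 7) => ha.
- by apply: Or31; split; apply/idP/idP; lia.
- have [hb|hb] := ltnP a 8; first by apply: Or32; lia.
  by apply: Or33; lia.
Qed.

Lemma loc2 (T : finType) (e : rel T) (Hs : simple_graph e) (f : 'I_7 -> T)
  (Hf : injective f) (He : forall a b, e (f a) (f b) = cycle_graph 7 a b) x y
  (Hx : forall i, f i != x) (Hy : forall i, f i != y) (Hxy : x != y) :
  let h := fun a => if a < 7 then f (inord a) else if a == 7 then x else y in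
  (forall a b, a < 9 -> b < 9 -> e (h a) (h b) = Q2 (pat e f x) (pat e f y) (e x y) a b) /\
  (forall a b, a < 9 -> b < 9 -> h a = h b -> a = b).
Proof.
case: Hs => Hsym Hirr h; split.
- move=> a b /cases9 Ha /cases9 Hb; rewrite /h /Q2 /Q1.
  case: Ha => [[ha1 ha2 ha3 ha4]|->|->]; case: Hb => [[hb1 hb2 hb3 hb4]|->|->];
   rewrite ?ha1 ?ha2 ?ha3 ?ha4 ?hb1 ?hb2 ?hb3 ?hb4 /=.
  + by rewrite He /cycle_graph /= !inordK.
  + by rewrite Hsym nth_pat.
  + by rewrite Hsym nth_pat.
  + by rewrite nth_pat.
  + by rewrite Hirr.
  + by [].
  + by rewrite nth_pat.
  + by rewrite Hsym.
  + by rewrite Hirr.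
- move=> a b /cases9 Ha /cases9 Hb; rewrite /h.
  case: Ha => [[ha1 ha2 ha3 ha4]|->|->]; case: Hb => [[hb1 hb2 hb3 hb4]|->|->];
   rewrite ?ha1 ?ha2 ?ha3 ?ha4 ?hb1 ?hb2 ?hb3 ?hb4 /= //.
  + by move/Hf/(congr1 val); rewrite /= !inordK.
  + by move=> E; move: (Hx (inord a)); rewrite E eqxx.
  + by move=> E; move: (Hy (inord a)); rewrite E eqxx.
  + by move=> E; move: (Hx (inord b)); rewrite E eqxx.
  + by move=> E; move: Hxy; rewrite E eqxx.
  + by move=> E; move: (Hy (inord b)); rewrite E eqxx.
  + by move=> E; move: Hxy; rewrite E eqxx.
Qed.

Theorem claim2 (T : finType) (e : rel T) :
  simple_graph e -> connected_graph e -> in_classC e ->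
  induced_in (cycle_graph 7) e ->
  #|T| <= 21.
Proof.
move=> Hs _ HC [f [Hf He]].
have outside x : (forall i, f i != x) -> pat e f x \in good7.
  move=> Hx; have [Hh Hinj] := loc1 Hs Hf He Hx.
  have Hin : pat e f x \in allbits 7 by have := allbitsP (pat e f x); rewrite size_pat.
  have := allP fin1 _ Hin.
  case/orP => // /hasP [t _ /andP [/andP [/eqP Ht Hk] Hc]].
  by rewrite (no_emb HC Hh Hinj _ Hk) in Hc.
have inside (i : 'I_7) : pat e f (f i) = cycpat i.
  apply: (@eq_from_nth _ false); rewrite ?size_pat ?size_map ?size_iota // => k hk.
  by rewrite nth_pat // (nth_map 0) ?size_iota // nth_iota // He /cycle_graph inordK.
have /andP [/allP F1 /allP F2] := fin3.
have inI (i : 'I_7) : val i \in iota 0 7 by rewrite mem_iota /= ltn_ord.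
have inj : injective (pat e f).
  move=> x y Exy.
  case: (pickP (fun i => f i == x)) => [i /eqP Ex|Hx];
  case: (pickP (fun i => f i == y)) => [j /eqP Ey|Hy].
  - rewrite -Ex -Ey !inside in Exy *; congr f; apply/val_inj.
    by apply/eqP; have /allP := F1 _ (inI i) => /(_ _ (inI j)); rewrite Exy eqxx.
  - have Hy' : forall i, f i != y by move=> k; rewrite Hy.
    have := outside _ Hy'; rewrite -Exy -Ex inside => H.
    by have := F2 _ (inI i); rewrite H.
  - have Hx' : forall i, f i != x by move=> k; rewrite Hx.
    have := outside _ Hx'; rewrite Exy -Ey inside => H.
    by have := F2 _ (inI j); rewrite H.
  - have Hx' : forall i, f i != x by move=> k; rewrite Hx.
    have Hy' : forall i, f i != y by move=> k; rewrite Hy.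
    apply/eqP/negPn/negP => Hxy.
    have [Hh Hinj] := loc2 Hs Hf He Hx' Hy' Hxy.
    have Hc0 : e x y \in [:: false; true] by case: (e x y).
    have := allP (allP fin2 _ (outside _ Hx')) _ Hc0.
    case/hasP => t _ /andP [/andP [_ Hk] Hc].
    rewrite -Exy in Hh.
    by rewrite (no_emb HC Hh Hinj _ Hk) in Hc.
have Hu : uniq (map (pat e f) (enum T)) by rewrite map_inj_uniq // enum_uniq.
have Hsub : {subset map (pat e f) (enum T) <= [seq cycpat i | i <- iota 0 7] ++ good7}.
  move=> s /mapP [x _ ->]; rewrite mem_cat.
  case: (pickP (fun i => f i == x)) => [i /eqP <-|Hx].
  - by rewrite inside map_f ?inI.
  - have Hx' : forall i, f i != x by move=> k; rewrite Hx.
    by rewrite (outside _ Hx') orbT.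
by rewrite cardE -(size_map (pat e f)); apply: (leq_trans (uniq_leq_size Hu Hsub)).
Qed.
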